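(* Let $\sigma$ be a super filling of $\mathrm{dg}(\lambda)$ (order $<_2$) that is not $\Phi$-trivial, with distinguished label $a$ and with distinguished cell in row $r$. Suppose either (1) $\sigma$ is $\Phi$-nondegenerate and $u$ is the distinguished cell, or (2) $\sigma$ is $\Phi$-degenerate and $u$ is any cell of the degenerate segment with $|\sigma(u)|=a$. Then every non-degenerate triple containing $u$ is a quinv triple in $\Phi_u(\sigma)$ if and only if it is a quinv triple in $\sigma$.
   Context: Let $\lambda=(\lambda_1\ge\dots\ge\lambda_k>0)$ be a partition; $\mathrm{dg}(\lambda)=\{(r,i):1\le i\le k,1\le r\le\lambda_i\}$, $(r,i)$ being row $r$ from the bottom and column $i$ from the left (columns bottom-justified of heights $\lambda_i$). $\mathcal A=\{1,\bar1,2,\bar2,\dots\}$ consists of positive letters $i$ and negative letters $\bar i$, $|i|=|\bar i|=i$, totally ordered by $<_2$: $0<1<2<3<\cdots<\bar3<\bar2<\bar1$. $I(a,b)=1$ if $a>b$ or $a=b$ is negative, and $I(a,b)=0$ if $a<b$ or $a=b$ is positive. A super filling is $\sigma:\mathrm{dg}(\lambda)\to\mathcal A$. A triple is either three cells $(r+1,i),(r,i),(r,j)$ with $i<j$ (non-degenerate), or (degenerate) two cells $(r,i),(r,j)$ with $i<j$ and $\lambda_i=r$; with $a'=\sigma((r+1,i))$ ($a'=0$ if degenerate), $b=\sigma((r,i))$, $c=\sigma((r,j))$, it is a quinv triple iff exactly one of $I(a',b)=1$, $I(c,b)=0$, $I(a',c)=0$ holds. The reading order goes through rows top to bottom, each row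 right to left. $\Phi_u(\sigma)$ changes the sign of the entry in cell $u$. The distinguished label of $\sigma$ is the smallest positive integer $a$ such that some cell $(r,j)$ has $|\sigma((r,j))|=a$ and $r>a$; if none exists $\sigma$ is $\Phi$-trivial. Otherwise the distinguished cell is the first cell in reading order whose entry has absolute value $a$; $\sigma$ is $\Phi$-degenerate if the distinguished cell belongs to some degenerate triple and $\Phi$-nondegenerate otherwise. If $r$ is the row of the distinguished cell, the degenerate segment is the set of cells of row $r$ that belong to degenerate triples. *)

(* Defs.v *)
From mathcomp Require Import all_boot.
Set Implicit Arguments. Unset Strict Implicit. Unset Printing Implicit Defensive.

(* Letters of the super alphabet, plus the auxiliary letter 0 used for a'
   in degenerate triples.  [Pos n] is the positive letter n, [Neg n] is the
   negative letter \bar n. *)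
Inductive letter := Zero | Pos of nat | Neg of nat.

Definition labs (x : letter) : nat :=
  match x with Zero => 0 | Pos n => n | Neg n => n end.

Definition isNeg (x : letter) : bool := if x is Neg _ then true else false.

(* The total order <_2 : 0 < 1 < 2 < 3 < ... < \bar3 < \bar2 < \bar1. *)
Definition ltL (x y : letter) : bool :=
  match x, y with
  | Zero, Zero => false
  | Zero, _ => true
  | _, Zero => false
  | Pos m, Pos n => m < n
  | Pos _, Neg _ => true
  | Neg _, Pos _ => false
  | Neg m, Neg n => n < m
  end.

Definition eqL (x y : letter) : bool :=
  match x, y with
  | Zero, Zero => true
  | Pos m, Pos n => m == n
  | Neg m, Neg n => m == n
  | _, _ => false
  end.

Definition Ifun (a b : letter) : bool := ltL b a || (eqL a b && isNeg a).

Definition quinv_cond (a' b c : letter) : bool :=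
  (Ifun a' b : nat) + (~~ Ifun c b : nat) + (~~ Ifun a' c : nat) == 1.

Definition is_partition (la : seq nat) : Prop :=
  sorted geq la /\ all (fun x => 0 < x) la.

Definition lam (la : seq nat) (i : nat) : nat := nth 0 la i.-1.

(* (r, i) in dg(lambda): row r from the bottom, column i from the left. *)
Definition inDg (la : seq nat) (r i : nat) : bool :=
  (1 <= i <= size la) && (1 <= r <= lam la i).

Definition filling := nat -> nat -> letter.

Definition super_filling (la : seq nat) (sigma : filling) : Prop :=
  forall r i, inDg la r i -> 0 < labs (sigma r i).

Definition ndTriple (la : seq nat) (r i j : nat) : bool :=
  [&& i < j, inDg la r.+1 i, inDg la r i & inDg la r j].

Definition degTriple (la : seq nat) (r i j : nat) : bool :=
  [&& i < j, lam la i == r, inDg la r i & inDg la r j].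

Definition ndTriple_contains (r i j : nat) (u : nat * nat) : bool :=
  (u == (r.+1, i)) || (u == (r, i)) || (u == (r, j)).

Definition quinv_nd (sigma : filling) (r i j : nat) : bool :=
  quinv_cond (sigma r.+1 i) (sigma r i) (sigma r j).

Definition in_deg_triple (la : seq nat) (u : nat * nat) : Prop :=
  exists i j, degTriple la u.1 i j /\ (u.2 = i \/ u.2 = j).

(* Reading order: rows top to bottom, each row right to left.
   read_before c d : c strictly precedes d. *)
Definition read_before (c d : nat * nat) : bool :=
  (d.1 < c.1) || ((c.1 == d.1) && (d.2 < c.2)).

Definition flip (x : letter) : letter :=
  match x with Zero => Zero | Pos n => Neg n | Neg n => Pos n end.

Definition Phi (u : nat * nat) (sigma : filling) : filling :=
  fun r i => if (r, i) == u then flip (sigma r i) else sigma r i.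

Definition dl_witness (la : seq nat) (sigma : filling) (a : nat) : Prop :=
  exists r j, inDg la r j /\ labs (sigma r j) = a /\ a < r.

Definition distinguished_label (la : seq nat) (sigma : filling) (a : nat) : Prop :=
  0 < a /\ dl_witness la sigma a /\
  forall b, 0 < b -> b < a -> ~ dl_witness la sigma b.

Definition Phi_trivial (la : seq nat) (sigma : filling) : Prop :=
  forall a, 0 < a -> ~ dl_witness la sigma a.

Definition distinguished_cell (la : seq nat) (sigma : filling) (a : nat)
    (c : nat * nat) : Prop :=
  inDg la c.1 c.2 /\ labs (sigma c.1 c.2) = a /\
  forall d : nat * nat, inDg la d.1 d.2 -> labs (sigma d.1 d.2) = a ->
    ~~ read_before d c.

Definition in_deg_segment (la : seq nat) (r : nat) (u : nat * nat) : Prop :=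
  u.1 = r /\ inDg la u.1 u.2 /\ in_deg_triple la u.

(* Main.v *)
Require Import Defs.
From mathcomp Require Import all_boot zify.
Ltac cmp := repeat match goal with
  | |- context [?x < ?y] => (is_var x + is_var y); case: (ltngtP x y) => //= ?; try lia
  | |- context [?x == ?y] => (is_var x + is_var y); case: (ltngtP x y) => //= ?; try lia
  end.
Lemma flip0 a x y z : labs x = a -> a <= labs y -> a <= labs z -> 0 < a ->
  quinv_cond (flip x) y z = quinv_cond x y z.
Proof.
case: x => [|m|m]; case: y => [|n|n]; case: z => [|k|k] //= <- *;
rewrite /quinv_cond /Ifun /=; cmp.
Qed.
Lemma flip1 a x y z : labs y = a -> a < labs x -> a < labs z -> 0 < a ->
  quinv_cond x (flip y) z = quinv_cond x y z.
Proof.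
case: x => [|m|m]; case: y => [|n|n]; case: z => [|k|k] //= H *; subst a;
rewrite /quinv_cond /Ifun /=; cmp.
Qed.
Lemma flip2 a x y z : labs z = a -> a < labs x -> a <= labs y -> 0 < a ->
  quinv_cond x y (flip z) = quinv_cond x y z.
Proof.
case: x => [|m|m]; case: y => [|n|n]; case: z => [|k|k] //= <- *;
rewrite /quinv_cond /Ifun /=; cmp.
Qed.

Lemma lam_mono la i k : is_partition la -> 1 <= i -> i <= k -> k <= size la ->
  lam la k <= lam la i.
Proof.
move=> [Hs _] Hi Hik Hk; rewrite /lam.
have := @sorted_leq_nth _ geq _ _ 0 la Hs i.-1 k.-1.
rewrite !inE; apply; try lia.
- by move=> x y z /= H1 H2; apply: leq_trans H2 H1.
- by move=> x /=.
Qed.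

Theorem mainTheorem10 (la : seq nat) (sigma : filling) (a : nat)
    (c u : nat * nat) :
  is_partition la ->
  super_filling la sigma ->
  ~ Phi_trivial la sigma ->
  distinguished_label la sigma a ->
  distinguished_cell la sigma a c ->
  ((~ in_deg_triple la c /\ u = c) \/
   (in_deg_triple la c /\ in_deg_segment la c.1 u /\
      labs (sigma u.1 u.2) = a)) ->
  forall r i j, ndTriple la r i j -> ndTriple_contains r i j u ->
    quinv_nd (Phi u sigma) r i j = quinv_nd sigma r i j.
Proof.
move=> Hpart Hsf _ [Ha [[r0 [j0 [Hd0 [Hl0 Hr0]]]] Hmin]] [Hcd [Hca Hcfirst]] Hcase.
have Hge : forall r' j', inDg la r' j' -> a <= r' -> a <= labs (sigma r' j').
  move=> r' j' Hd Hr; rewrite leqNgt; apply/negP => Hlt.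
  apply: (Hmin (labs (sigma r' j'))); first exact: Hsf.
  - done.
  - exists r', j'; split => //; split => //; lia.
have Hrc : r0 <= c.1.
  have := Hcfirst (r0, j0) Hd0 Hl0; rewrite /read_before /=.
  case: ltnP => //.
have Habove : forall r' j', inDg la r' j' -> c.1 < r' -> labs (sigma r' j') <> a.
  move=> r' j' Hd Hr Heq; have := Hcfirst (r', j') Hd Heq.
  by rewrite /read_before /= Hr.
have Hright : forall j', inDg la c.1 j' -> c.2 < j' -> labs (sigma c.1 j') <> a.
  move=> j' Hd Hr Heq; have := Hcfirst (c.1, j') Hd Heq.
  by rewrite /read_before /= Hr eqxx orbT.
have [Hu1 Hua] : u.1 = c.1 /\ labs (sigma u.1 u.2) = a.
  by case: Hcase => [[_ ->]|[_ [[H _] H']]].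
case: u Hcase Hu1 Hua => u1 u2 Hcase /= Hu1 Hua r i j Hnd.
case/and4P: Hnd => Hij Hd1 Hd2 Hd3.
rewrite /ndTriple_contains /quinv_nd /Phi !xpair_eqE.
case/orP => [/orP [] | ] /andP [/eqP E1 /eqP E2];
  move: Hu1 Hua Hcase; rewrite E1 E2 => Hu1 Hua Hcase; clear E1 E2.
-
  have -> : (r == r.+1) = false by lia.
  rewrite !eqxx !andFb !andbT.
  apply: (@flip0 a) => //.
  + apply: Hge => //; lia.
  + apply: Hge => //; lia.
-
  have -> : (r.+1 == r) = false by lia.
  have -> : (j == i) = false by lia.
  rewrite !eqxx !andFb !andbF !andbT.
  apply: (@flip1 a) => //.
  + have := Hge _ _ Hd1; have := Habove _ _ Hd1; lia.
  + have Hrj : c.2 < j.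
      case: Hcase => [[_ Hc]|[_ [[_ [_ [i' [j' [Hdeg Hor]]]]] _]]].
        by rewrite -Hc.
      exfalso; case/and4P: Hdeg => Hi'j' /eqP Hlam /andP [/andP [H1 _] _] /andP [Hj' _].
      move: Hd1 Hd2 => /andP [/andP [Hi1 Hi2] /andP [_ Hr1]] _.
      rewrite /= in Hor Hlam; case: Hor => Hor; subst.
      * lia.
      * have := @lam_mono la i' j' Hpart H1 (ltnW Hi'j') Hi2; lia.
    rewrite Hu1 in Hd3 *.
    have := Hge _ _ Hd3; have := Hright _ Hd3 Hrj; lia.
-
  have -> : (r.+1 == r) = false by lia.
  have -> : (i == j) = false by lia.
  rewrite !eqxx !andFb !andbF !andbT.
  apply: (@flip2 a) => //.
  + have := Hge _ _ Hd1; have := Habove _ _ Hd1; lia.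
  + apply: Hge => //; lia.
Qed.
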